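(* Let $\overrightarrow{C}=\bigcup_{j=1}^t m_j\overrightarrow{C_{n_j}}$ be an oriented 2-regular graph with at least two cycle components, where $n_1<n_2<\dots<n_t$ are the distinct cycle lengths, $m_j\ge1$ is the number of components of length $n_j$, and $\sum_j m_j\ge2$. Let $2\le k\le n_1-1$ be such that $\{k\}$ is a distance set of $\overrightarrow{C}$. Then $\overrightarrow{C}$ is $\{k\}$-antimagic if and only if it is unidirectional.
   Context: An oriented graph is a simple graph each of whose edges is given one direction (an arc $(u,v)$ goes from $u$ to $v$). For vertices $u,v$, $d(u,v)$ is the length of a shortest directed path from $u$ to $v$ ($d(u,u)=0$, $\infty$ if no path). A distance set of an oriented graph is a nonempty set $D$ of nonnegative integers each of which is a finite distance $d(u,v)$ for some pair of vertices. $N_D(v)=\{y : d(v,y)\in D\}$; for a bijection $f:V\to\{1,\dots,|V|\}$, $\omega_D(v)=\sum_{x\in N_D(v)}f(x)$ (empty sum $0$); $f$ is $D$-antimagic if distinct vertices have distinct $D$-weights, and the graph is $D$-antimagic if such an $f$ exists. An oriented 2-regular graph is an orientation of a disjoint union of cycles, each of length at least $3$. A cycle component on $v_1,\dots,v_n$ is unidirectional if (up to relabeling) its arcs are $(v_i,v_{i+1})$, $1\le i\le n-1$, and $(v_n,v_1)$; the oriented 2-regular graph is unidirectional if every cycle component is unidirectional. *)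

(* Defs.v *)
From mathcomp Require Import all_boot.
Set Implicit Arguments. Unset Strict Implicit. Unset Printing Implicit Defensive.

Section OrientedGraphs.
Variable V : finType.
Variable a : rel V.  (* arc relation: a u v means the arc (u,v) *)

Definition oriented : Prop :=
  (forall x, ~~ a x x) /\ (forall x y, a x y -> ~~ a y x).

Definition ug : rel V := fun x y => a x y || a y x.

(* oriented 2-regular graph: underlying simple graph is 2-regular,
   i.e. a disjoint union of cycles (each of length >= 3) *)
Definition oriented_2regular : Prop :=
  oriented /\ forall x, #|[set y | ug x y]| = 2.

Definition ccomp (x : V) : {set V} := [set y | connect ug x y].

Definition step (S : {set V}) : {set V} := [set y | [exists x in S, a x y]].
Definition reachk (u : V) (k : nat) : {set V} := iter k step [set u].

Definition dist_eq (u v : V) (k : nat) : bool :=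
  (v \in reachk u k) && [forall j : 'I_k, v \notin reachk u j].

Definition distance_set (D : seq nat) : Prop :=
  D != [::] /\ forall d, d \in D -> exists u v, dist_eq u v d.

Definition ND (D : seq nat) (v : V) : {set V} :=
  [set y | has (dist_eq v y) D].

(* f : V -> {1,...,|V|} is a bijection *)
Definition labeling (f : V -> nat) : Prop :=
  injective f /\ forall x, 1 <= f x <= #|V|.

Definition weight (D : seq nat) (f : V -> nat) (v : V) : nat :=
  \sum_(y in ND D v) f y.

Definition D_antimagic_labeling (D : seq nat) (f : V -> nat) : Prop :=
  labeling f /\ injective (weight D f).

Definition D_antimagic (D : seq nat) : Prop :=
  exists f, D_antimagic_labeling D f.

(* every cycle component is unidirectional: its vertices can be listed
   cyclically as v_1..v_n so that its arcs are exactly (v_i, v_{i+1}) and (v_n, v_1) *)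
Definition unidirectional : Prop :=
  forall x, exists s : seq V,
    [/\ uniq s, (forall y, (y \in s) = (y \in ccomp x))
      & forall y z, y \in s -> a y z = (z == next s y)].

End OrientedGraphs.

(* Main.v *)
Require Import Defs.
From mathcomp Require Import all_boot zify.
Set Implicit Arguments. Unset Strict Implicit. Unset Printing Implicit Defensive.

Section S.
Variable V : finType.
Variable a : rel V.
Hypothesis H2 : oriented_2regular a.

Definition outd x := \sum_(y : V) (a x y : nat).
Definition ind x := \sum_(y : V) (a y x : nat).

Lemma deg2 x : outd x + ind x = 2.
Proof.
case: H2 => [[irr asym] Hd].
rewrite -(Hd x) -sum1dep_card big_mkcond /outd /ind -big_split /=.
apply: eq_bigr => y _; rewrite /ug.
case Hxy: (a x y); case Hyx: (a y x) => //=.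
by move: (asym _ _ Hxy); rewrite Hyx.
Qed.

Lemma sum_io : \sum_x outd x = \sum_x ind x.
Proof. by rewrite /outd /ind exchange_big. Qed.

Lemma two_le_sum (F : V -> nat) x0 x1 : x0 != x1 -> 0 < F x0 -> 0 < F x1 ->
  2 <= \sum_x F x.
Proof.
move=> ne h0 h1; rewrite (bigD1 x0) // (bigD1 x1) /=; last by rewrite eq_sym.
move: h0 h1; lia.
Qed.

Lemma sum_lt (F G : V -> nat) x0 : (forall x, F x <= G x) -> F x0 < G x0 ->
  \sum_x F x < \sum_x G x.
Proof.
move=> hl h0; rewrite (bigD1 x0) // [X in _ < X](bigD1 x0) //=.
by rewrite -addSn leq_add // leq_sum.
Qed.

Lemma split3 (F : V -> nat) t w1 w2 : uniq [:: t; w1; w2] ->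
  \sum_x F x = F t + F w1 + F w2 +
     \sum_(x | (x != t) && (x != w1) && (x != w2)) F x.
Proof.
rewrite /= !inE negb_or => /andP[/andP[n1 n2] /andP[n3 _]].
rewrite (bigD1 t) //= (bigD1 w1) /=; last by rewrite eq_sym.
rewrite (bigD1 w2) /=; last by rewrite eq_sym n2 eq_sym.
by rewrite !addnA.
Qed.

Lemma reach_bad u j : (forall y, a u y -> forall z, ~~ a y z) -> 2 <= j ->
  reachk a u j = set0.
Proof.
move=> hb; case: j => // [[//|j]] _.
have h2 : reachk a u 2 = set0.
  apply/setP => z; rewrite in_set0 /reachk /= /step inE.
  apply/negbTE/negP => /existsP[y /andP[]]; rewrite inE => /existsP[x /andP[]].
  by rewrite inE => /eqP -> /hb /(_ z) /negP.
rewrite /reachk -(addn2 j) iterD -/(reachk a u 2) h2.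
elim: j => //= j ->; apply/setP => z; rewrite in_set0 /step inE; apply/negbTE/negP => /existsP[x].
by rewrite inE.
Qed.

Section Succ.
Variable succ : V -> V.
Hypothesis Hs : forall x y, a x y = (y == succ x).

Lemma outd1 x : outd x = 1.
Proof.
rewrite /outd (eq_bigr (fun y => if y == succ x then 1 else 0)).
  by rewrite -big_mkcond big_pred1_eq.
by move=> y _; rewrite Hs; case: eqP.
Qed.

Lemma succ_inj : injective succ.
Proof.
move=> y y' e; apply/eqP/negPn/negP => ne.
have := deg2 (succ y); rewrite outd1 => h.
have : 2 <= ind (succ y).
  apply: (two_le_sum ne); by rewrite Hs ?e eqxx.
move: h; lia.
Qed.

Lemma conn_eq x y : connect (ug a) x y = fconnect succ x y.
Proof.
apply/idP/idP; apply: connect_sub => u v.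
  rewrite /ug !Hs => /orP[/eqP ->|/eqP ->]; first exact: fconnect1.
  by rewrite fconnect_sym ?fconnect1 //; exact: succ_inj.
by move=> /eqP <-; apply: connect1; rewrite /ug Hs eqxx.
Qed.

Lemma card_ccomp x : #|ccomp a x| = order succ x.
Proof. by rewrite /order -cardsE; apply: eq_card => y; rewrite !inE conn_eq. Qed.

Lemma reach_iter u j : reachk a u j = [set iter j succ u].
Proof.
elim: j => [//|j IH]; rewrite /reachk iterS -/(reachk a u j) IH.
apply/setP => z; rewrite !inE; apply/existsP/eqP => [[x]|->].
  by rewrite inE => /andP[/eqP -> ]; rewrite Hs => /eqP.
by exists (iter j succ u); rewrite inE eqxx Hs /=.
Qed.

Lemma unidir : unidirectional a.
Proof.
move=> x; exists (orbit succ x); split.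
- exact: orbit_uniq.
- by move=> y; rewrite -fconnect_orbit inE conn_eq.
- move=> y z hy; rewrite Hs.
  have hc : fcycle succ (orbit succ x).
    apply/injectivePcycle => u v _ _; exact: succ_inj.
  by rewrite (eqP (next_cycle hc hy)).
Qed.

End Succ.

Lemma get_succ : (forall x, exists y, forall z, a x z = (z == y)) ->
  exists succ : V -> V, forall x y, a x y = (y == succ x).
Proof.
move=> h; exists (fun x => odflt x [pick y | a x y]) => x z.
have [y hy] := h x.
case: pickP => [y' hy'|h0] /=.
  by rewrite hy; move: hy'; rewrite hy => /eqP ->.
by move: (h0 y); rewrite hy eqxx.
Qed.

End S.

Lemma iter_inj (V : finType) (f : V -> V) n : injective f -> injective (iter n f).
Proof. move=> fi; elim: n => //= n IH x y /fi; exact: IH. Qed.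

Theorem mainTheorem18 (V : finType) (a : rel V) (k : nat) :
  oriented_2regular a ->
  (exists x y : V, y \notin ccomp a x) ->
  2 <= k ->
  (forall x : V, k <= #|ccomp a x| - 1) ->
  distance_set a [:: k] ->
  (D_antimagic a [:: k] <-> unidirectional a).
Proof.
move=> H2 _ k2 hk _; have [[irr asym] Hd] := H2; split.
- case=> f [[finj fb] winj].
  have w0 u : (forall y, a u y -> forall z, ~~ a y z) -> weight a [::k] f u = 0.
    move=> hb; rewrite /weight (_ : ND a [::k] u = set0) ?big_set0 //.
    apply/setP => y; rewrite in_set0 /ND inE /= orbF /dist_eq (reach_bad hb k2).
    by rewrite in_set0.
  have buniq u v : (forall y, a u y -> forall z, ~~ a y z) ->
      (forall y, a v y -> forall z, ~~ a y z) -> u = v.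
    by move=> hu hv; apply: winj; rewrite !w0.
  have notbad x : ~~ [exists y, a x y && [exists z, a y z]] ->
      (forall y, a x y -> forall z, ~~ a y z).
    move=> hn y axy z; apply/negP => ayz; move/negP: hn; apply.
    by apply/existsP; exists y; rewrite axy; apply/existsP; exists z.
  have nosink t : exists y, a t y.
    case: (boolP [exists y, a t y]) => [/existsP //| hn]; exfalso.
    have ht y : ~~ a t y.
      by apply/negP => h; move/negP: hn; apply; apply/existsP; exists y.
    have bt : forall y, a t y -> forall z, ~~ a y z by move=> y; rewrite (negbTE (ht y)).
    have ot : outd a t = 0 by rewrite /outd big1 // => y _; rewrite (negbTE (ht y)).
    have it : ind a t = 2 by have := deg2 H2 t; rewrite ot.
    move/eqP: (Hd t) => /cards2P [w1 [w2 [nw Sw]]].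
    have hw w : w \in [set y | ug a t y] -> (w != t) && (outd a w == 2) && (ind a w == 0).
      rewrite inE /ug (negbTE (ht w)) /= => awt.
      have wt : w != t by apply/eqP => e; move: (irr t); rewrite -{1}e awt.
      case: (boolP [exists y, a w y && [exists z, a y z]]) => [|hn2]; last first.
        by move: wt; rewrite (buniq _ _ (notbad _ hn2) bt) eqxx.
      case/existsP => y /andP[awy /existsP[z ayz]].
      have yt : t != y by apply/eqP => e; move: ayz; rewrite -e (negbTE (ht z)).
      have := @two_le_sum _ (fun z => nat_of_bool (a w z)) t y yt.
      rewrite /= awt awy => /(_ isT isT); rewrite -/(outd a w) => h.
      have := deg2 H2 w; rewrite wt /=; move: h; lia.
    have /andP[/andP[w1t /eqP o1] /eqP i1] : (w1 != t) && (outd a w1 == 2) && (ind a w1 == 0).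
      by apply: hw; rewrite Sw !inE eqxx.
    have /andP[/andP[w2t /eqP o2] /eqP i2] : (w2 != t) && (outd a w2 == 2) && (ind a w2 == 0).
      by apply: hw; rewrite Sw !inE eqxx orbT.
    have le x : x != t -> ind a x <= outd a x.
      move=> xt; case: (boolP [exists y, a x y && [exists z, a y z]]) => [|hn2]; last first.
        by move: xt; rewrite (buniq _ _ (notbad _ hn2) bt) eqxx.
      case/existsP => y /andP[axy _].
      have : 0 < outd a x by rewrite /outd (bigD1 y) //= axy.
      have := deg2 H2 x; lia.
    have u3 : uniq [:: t; w1; w2].
      rewrite /= !inE negb_or !andbT.
      by rewrite (eq_sym t w1) w1t (eq_sym t w2) w2t nw.
    have := sum_io a; rewrite (split3 _ u3) (split3 (ind a) u3) ot it o1 o2 i1 i2.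
    have : \sum_(x | (x != t) && (x != w1) && (x != w2)) ind a x <=
           \sum_(x | (x != t) && (x != w1) && (x != w2)) outd a x.
      by apply: leq_sum => x /andP[/andP[xt _] _]; apply: le.
    lia.
  have out1 x : outd a x = 1.
    have ge1 y : 0 < outd a y.
      by case: (nosink y) => z ayz; rewrite /outd (bigD1 z) //= ayz.
    have le y : ind a y <= outd a y by have := deg2 H2 y; have := ge1 y; lia.
    apply/eqP; rewrite eqn_leq ge1 andbT; rewrite leqNgt; apply/negP => h.
    have : ind a x < outd a x by have := deg2 H2 x; move: h; lia.
    by move/(sum_lt le); rewrite sum_io ltnn.
  have exy x : exists y, forall z, a x z = (z == y).
    case: (nosink x) => y axy; exists y => z; apply/idP/eqP => [axz|->//].
    apply/eqP/negPn/negP => ne.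
    have := @two_le_sum _ (fun z => nat_of_bool (a x z)) z y ne.
    by rewrite /= axz axy => /(_ isT isT); rewrite -/(outd a x) out1.
  case: (get_succ exy) => succ Hs. exact (@unidir V a H2 succ Hs).
- move=> hu.
  have exy x : exists y, forall z, a x z = (z == y).
    case: (hu x) => s [us ms hs]; exists (next s x) => z; apply: hs.
    by rewrite ms inE connect0.
  case: (get_succ exy) => succ Hs.
  have sinj : injective succ := @succ_inj V a H2 succ Hs.
  exists (fun x => (enum_rank x).+1); split; first split.
  + by move=> x y [] /val_inj/enum_rank_inj.
  + by move=> x /=; rewrite ltn_ord.
  have ND1 v : ND a [::k] v = [set iter k succ v].
    apply/setP => y; rewrite /ND !inE /= orbF /dist_eq (reach_iter Hs) inE.
    case: eqP => //= ->; apply/forallP => j; rewrite (reach_iter Hs) inE.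
    apply/eqP => e.
    have ho : k < order succ v by rewrite -(card_ccomp H2 Hs); have := hk v; lia.
    have := findex_iter (ltn_trans (ltn_ord j) ho); rewrite -e findex_iter // => ejk.
    by move: (ltn_ord j) ejk; lia.
  move=> u v; rewrite /weight !ND1 !big_set1 /= => -[] /val_inj/enum_rank_inj.
  exact: iter_inj.
Qed.
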